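(* For integers $0\le l\le m$ define $B_{l,m}:=\dfrac{A_{l,m}}{2^{l}(m+1-l)_{2l}}$. Then $B_{m,m}=1$, $B_{m-1,m}=2m+1$ (for $m\ge1$), $$B_{l-1,m}=(2m+1)B_{l,m}-(m-l)(m+l+1)B_{l+1,m}\qquad(1\le l\le m-1),$$ and every $B_{l,m}$ ($0\le l\le m$) is an odd integer.
   Context: $A_{l,m}=\frac{l!\,m!}{2^{m-l}}\sum_{k=l}^{m}2^{k}\binom{2m-2k}{m-k}\binom{m+k}{k}\binom{k}{l}$ (equivalently $l!m!2^{m+l}d_{l,m}$ with $d_{l,m}=2^{-2m}\sum_{k=l}^{m}2^{k}\binom{2m-2k}{m-k}\binom{m+k}{m}\binom{k}{l}$). $(x)_k=x(x+1)\cdots(x+k-1)$ for $k\ge1$, $(x)_0=1$. *)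

(* Defs.v *)
From mathcomp Require Import all_boot all_order all_algebra.
Set Implicit Arguments. Unset Strict Implicit. Unset Printing Implicit Defensive.
Import GRing.Theory Num.Theory.
Local Open Scope ring_scope.

Definition poch (x k : nat) : nat := (\prod_(i < k) (x + i))%N.

Definition Acoef (l m : nat) : rat :=
  (l`! * m`!)%N%:R / (2 ^ (m - l))%N%:R *
  (\sum_(l <= k < m.+1) (2 ^ k * 'C(2 * m - 2 * k, m - k) * 'C(m + k, k) * 'C(k, l))%N%:R).

Definition Bcoef (l m : nat) : rat :=
  Acoef l m / (2 ^ l * poch (m + 1 - l) (2 * l))%N%:R.

(* Main.v *)
From Stdlib Require Import Arith ArithRing Lia.
Require Import Defs.
From mathcomp Require Import all_boot all_order all_algebra.
Set Implicit Arguments. Unset Strict Implicit. Unset Printing Implicit Defensive.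

Ltac nring := match goal with |- @eq _ ?a ?b => change (@eq nat a b) end; rewrite -?plusE -?multE; ring.

Definition T (m k l : nat) : nat := (2 ^ k * 'C(2 * m - 2 * k, m - k) * 'C(m + k, k) * 'C(k, l))%N.

Lemma centr d : (d.+1 * 'C((2* d).+2, d.+1) = 2 * (2* d).+1 * 'C(2* d, d))%N.
Proof.
have h1 : ((2* d).+1 * 'C(2* d, d) = d.+1 * 'C((2* d).+1, d.+1))%N := mul_bin_diag _ _.
have h3 : 'C((2* d).+2, d.+1) = ('C((2* d).+1, d.+1) + 'C((2* d).+1, d))%N by [].
have h4 : 'C((2* d).+1, d) = 'C((2* d).+1, d.+1).
  have := bin_sub (n:=(2* d).+1) (m:=d.+1); rewrite (_ : (2* d).+1 - d.+1 = d)%N.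
    by move=> ->//; rewrite ltnS mul2n -addnn leq_addr.
  by rewrite mul2n -addnn subSS addnK.
rewrite h3 h4 /= mulnDr -h1. nring.
Qed.

Ltac nlia := repeat match goal with H : is_true (_ <= _)%N |- _ => move/leP: H => H end;
  try apply/leP; unfold addn, muln, subn in *; lia.

Lemma Glem m k l' : (k <= m)%N ->
  (l'.+1 * (2* m+1 - 2* k.+1) * T m k.+1 l'.+1 = (m-k)*(m+k+1)*T m k l')%N.
Proof.
move=> hk; have [d ->] : exists d, m = (k + d)%N by exists (m - k); rewrite subnKC.
case: d => [|d].
  rewrite addn0 subnn (_ : 2* k+1 - 2* k.+1 = 0)%N; last by nlia. by rewrite !mul0n muln0.
rewrite /T.
rewrite (_ : 2*(k+d.+1)+1 - 2* k.+1 = (2* d).+1)%N; last by nlia.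
rewrite (_ : 2*(k+d.+1) - 2* k.+1 = 2* d)%N; last by nlia.
rewrite (_ : (k+d.+1) - k.+1 = d)%N; last by nlia.
rewrite (_ : 2*(k+d.+1) - 2* k = (2* d).+2)%N; last by nlia.
rewrite (_ : (k+d.+1) - k = d.+1)%N; last by nlia.
rewrite (_ : (k+d.+1) + k.+1 = (2* k+d).+2)%N; last by nlia.
rewrite (_ : (k+d.+1) + k = (2* k+d).+1)%N; last by nlia.
rewrite addn1.
have fB : ((2* k+d).+2 * 'C((2* k+d).+1, k) = k.+1 * 'C((2* k+d).+2, k.+1))%N := mul_bin_diag _ _.
have fc : (k.+1 * 'C(k, l') = l'.+1 * 'C(k.+1, l'.+1))%N := mul_bin_diag _ _.
have cd := centr d.
apply/eqP; rewrite -(eqn_pmul2l (ltn0Sn k)); apply/eqP.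
transitivity (2^k * (d.+1 * 'C((2* d).+2, d.+1)) * ((2* k+d).+2 * 'C((2* k+d).+1, k)) * (k.+1 * 'C(k, l')))%N; last by nring.
rewrite cd fB fc expnS; nring.
Qed.

Lemma term m k l' : (k <= m)%N -> (l'.+1 <= m)%N ->
 ((m - l') * (m + l'.+1) * T m k l' + l'.+1 * l'.+2 * T m k l'.+2 + l'.+1 * (2 * m+1-2 * k) * T m k l'.+1
 = (2 * m+1) * l'.+1 * T m k l'.+1 + l'.+1 * (2 * m+1-2 * k.+1) * T m k.+1 l'.+1)%N.
Proof.
move=> hk hl; rewrite Glem //; rewrite /T.
set P := (2 ^ k * 'C(2 * m - 2 * k, m - k) * 'C(m + k, k))%N; clearbody P.
have [d ->] : exists d, m = (k + d)%N by exists (m - k); rewrite subnKC.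
case: (ltnP k l') => hkl.
  have z0 : 'C(k, l') = 0%N := bin_small hkl.
  have z1 : 'C(k, l'.+1) = 0%N := bin_small (ltnW hkl : (k < l'.+1)%N).
  have z2 : 'C(k, l'.+2) = 0%N := bin_small (leqW (ltnW hkl) : (k < l'.+2)%N).
  by rewrite z0 z1 z2 !muln0.
have [j ->] : exists j, k = (l' + j)%N by exists (k - l'); rewrite subnKC.
case: j hk hl hkl => [|j] hk hl hkl.
  rewrite addn0 in hk hl hkl *.
  have z1 : 'C(l', l'.+1) = 0%N := bin_small (ltnSn _).
  have z2 : 'C(l', l'.+2) = 0%N := bin_small (leqW (ltnSn _)).
  rewrite z1 z2 !muln0 (_ : l' + d - l' = d)%N; last by nlia.
  nring.
have h1 : (l'.+1 * 'C(l' + j.+1, l'.+1) = j.+1 * 'C(l' + j.+1, l'))%N.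
  by rewrite mul_bin_left (_ : l' + j.+1 - l' = j.+1)%N //; nlia.
have h2 : (l'.+2 * 'C(l' + j.+1, l'.+2) = j * 'C(l' + j.+1, l'.+1))%N.
  by rewrite mul_bin_left (_ : l' + j.+1 - l'.+1 = j)%N //; nlia.
rewrite (_ : l' + j.+1 + d - l' = j.+1 + d)%N; last by nlia.
rewrite (_ : l' + j.+1 + d - (l' + j.+1) = d)%N; last by nlia.
rewrite (_ : 2 * (l' + j.+1 + d) + 1 - 2 * (l' + j.+1) = (2 * d).+1)%N; last by nlia.
transitivity (d * (2 * (l' + j.+1) + d + 1) * P * 'C(l' + j.+1, l') + (2 * l' + j.+1 + 1) * P * (j.+1 * 'C(l' + j.+1, l'))
  + l'.+1 * P * (l'.+2 * 'C(l' + j.+1, l'.+2)) + l'.+1 * (2 * d).+1 * P * 'C(l' + j.+1, l'.+1))%N.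
  nring.
rewrite -h1 h2; nring.
Qed.

Definition S (m l : nat) : nat := (\sum_(l <= k < m.+1) T m k l)%N.

Lemma Sfull m l : S m l = (\sum_(0 <= k < m.+1) T m k l)%N.
Proof.
rewrite /S; case: (leqP l m.+1) => hl.
  rewrite [RHS](@big_cat_nat _ _ _ l 0 m.+1) //=.
  suff -> : (\sum_(0 <= i < l) T m i l = 0)%N by rewrite add0n.
  rewrite big_nat big1 // => k /andP[_ hk].
  by rewrite /T (bin_small hk) muln0.
rewrite big_geq ?(ltnW hl) //; apply/esym.
rewrite big_nat big1 // => k /andP[_ hk].
rewrite /T (bin_small (ltn_trans hk hl)) muln0 //.
Qed.

Lemma key m l' : (l'.+1 <= m)%N ->
 ((m - l') * (m + l'.+1) * S m l' + l'.+1 * l'.+2 * S m l'.+2 = (2 * m+1) * l'.+1 * S m l'.+1)%N.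
Proof.
move=> hl; rewrite !Sfull.
pose G k := (l'.+1 * (2 * m+1-2 * k) * T m k l'.+1)%N.
have E : (\sum_(0 <= k < m.+1) ((m - l') * (m + l'.+1) * T m k l' + l'.+1 * l'.+2 * T m k l'.+2 + G k)
   = \sum_(0 <= k < m.+1) ((2 * m+1) * l'.+1 * T m k l'.+1 + G k.+1))%N.
  by apply: eq_big_nat => k /andP[_ hk]; apply: term.
rewrite !big_split -!big_distrr in E.
have G0 : (\sum_(0 <= k < m.+1) G k = \sum_(0 <= k < m.+1) G k.+1)%N.
  rewrite big_nat_recl // big_nat_recr //= /G /T (@bin_small 0 l'.+1) // !muln0 add0n.
  by rewrite (_ : 2 * m + 1 - 2 * m.+1 = 0)%N ?muln0 ?mul0n ?addn0 //; nlia.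
by apply/eqP; rewrite -(eqn_add2r (\sum_(0 <= k < m.+1) G k)%N) E G0.
Qed.

Import GRing.Theory Num.Theory.
Local Open Scope ring_scope.

Lemma poch_fact x n : (x`! * poch x.+1 n = (x + n)`!)%N.
Proof.
elim: n => [|n IH]; first by rewrite /poch big_ord0 muln1 addn0.
rewrite /poch big_ord_recr /= -/(poch x.+1 n) mulnA IH addnS factS; nring.
Qed.

Lemma nz (n : nat) : (0 < n)%N -> (n%:R : rat) != 0.
Proof. by move=> h; rewrite pnatr_eq0 -lt0n. Qed.

Lemma fracK (a b c : nat) : (0 < c)%N -> ((a * c)%:R / (b * c)%:R : rat) = a%:R / b%:R.
Proof. by move=> h; rewrite !natrM -mulf_div divff ?mulr1 // nz. Qed.

Lemma aux (a b c d e f : rat) : a * b * c * d * e * f = a * b * f * (c * d * e).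
Proof. by rewrite -!mulrA; congr (_ * (_ * _)); rewrite [RHS]mulrC -!mulrA. Qed.

Lemma Bform l m : (l <= m)%N ->
  Bcoef l m = (l`! * m`! * (m - l)`! * S m l)%N%:R / (2 ^ m * (m + l)`!)%N%:R.
Proof.
move=> hl; rewrite /Bcoef /Acoef.
have -> : (\sum_(l <= k < m.+1) (2 ^ k * 'C(2 * m - 2 * k, m - k) * 'C(m + k, k) * 'C(k, l))%N%:R : rat)
   = (S m l)%:R by rewrite natr_sum.
have e1 : (l`! * m`! * (m - l)`! * S m l = (l`! * m`! * S m l) * (m - l)`!)%N by nring.
have e2 : (m + 1 - l = (m - l).+1)%N by nlia.
have e3 : (m - l + 2 * l = m + l)%N by nlia.
have e4 : (2 ^ m * (m + l)`! = (2 ^ (m - l) * (2 ^ l * poch (m + 1 - l) (2 * l))) * (m - l)`!)%N.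
  have e5 : (2 ^ m = 2 ^ (m - l) * 2 ^ l)%N by rewrite -expnD subnK.
  rewrite e2 -e3 -poch_fact e5; nring.
rewrite e1 e4 fracK ?fact_gt0 // !natrM !invfM !mulrA.
by rewrite (mulrAC (l`!%:R * m`!%:R)).
Qed.

Lemma frac3 (a b c x y z : nat) : (0 < x)%N -> (0 < y)%N -> (0 < z)%N ->
  (a * y * z + c * x * y = b * x * z)%N ->
  (a%:R / x%:R : rat) = b%:R / y%:R - c%:R / z%:R.
Proof.
move=> hx hy hz H; apply/eqP; rewrite eq_sym subr_eq addf_div ?nz // eqr_div ?nz ?mulf_neq0 ?nz //.
have H2 : (b * (x * z) = (a * z + c * x) * y)%N.
  transitivity (b * x * z)%N; first by nring.
  rewrite -H; nring.
have := congr1 (fun n : nat => (n%:R : rat)) H2.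
by rewrite /= !natrM natrD !natrM => ->.
Qed.

Lemma rec m l' : (l'.+2 <= m)%N ->
  Bcoef l' m = (2 * m + 1)%N%:R * Bcoef l'.+1 m
     - ((m - l'.+1) * (m + l'.+1 + 1))%N%:R * Bcoef l'.+2 m.
Proof.
move=> hm; have K := key (ltnW hm).
have h1 : (l' <= m)%N by apply: leq_trans (ltnW (ltnW hm)).
rewrite !Bform // ?(ltnW hm) // !mulrA -!natrM.
have [e he] : exists e, m = (l'.+2 + e)%N by exists (m - l'.+2)%N; rewrite subnKC.
have e1 : (m - l' = e.+2)%N by nlia.
have e2 : (m - l'.+1 = e.+1)%N by nlia.
have e3 : (m - l'.+2 = e)%N by nlia.
rewrite e1 e2 e3 in K *.
apply: frac3; rewrite ?muln_gt0 ?expn_gt0 ?fact_gt0 //.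
rewrite !addnS !factS in K *.
transitivity (l'`! * m`! * e.+1 * e`! * (2 ^ m * 2 ^ m) * ((m + l')`! * (m + l')`!) * (m + l').+1 * (m + l').+2
   * (e.+2 * (m + l').+1 * S m l' + l'.+1 * l'.+2 * S m l'.+2))%N.
  nring.
rewrite K; nring.
Qed.

Lemma oddstep (m c : nat) (w1 w0 : int) :
 (2 * m + 1)%N%:Z * (2 * w1 + 1) - (2 * c)%N%:Z * (2 * w0 + 1)
   = 2 * ((2 * m + 1)%N%:Z * w1 + m%:Z - c%:Z * (2 * w0 + 1)) + 1.
Proof.
set A := (2 * m + 1)%N%:Z.
have hA : A = 2 * m%:Z + 1 by rewrite /A PoszD PoszM.
have h2 : (2 * c)%N%:Z = 2 * c%:Z by rewrite PoszM.
rewrite h2 mulrDr mulr1 (mulrCA A) -mulrA mulrDr mulrBr mulrDr {2}hA.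
by rewrite (mulrDr 2 (A * w1)) addrA (addrAC (2 * (A * w1) + 2 * m)).
Qed.

Lemma oddabs (w : int) : odd (absz (2 * w + 1)).
Proof.
case: w => n.
  have -> : 2 * Posz n + 1 = Posz (2 * n + 1)%N by rewrite PoszD PoszM.
  by rewrite absz_nat oddD oddM.
rewrite NegzE.
have -> : 2 * - Posz n.+1 + 1 = - Posz (2 * n + 1)%N.
  have e : 2 * Posz n.+1 = Posz (2 * n + 1)%N + 1.
    rewrite -PoszD -PoszM; congr Posz; nring.
  by rewrite mulrN e opprD addrNK.
by rewrite abszN absz_nat oddD oddM.
Qed.

Lemma Bmm m : Bcoef m m = 1.
Proof.
rewrite Bform // subnn fact0 muln1 /S big_nat1 /T !subnn bin0 binn muln1.
have hb := bin_fact (leq_addr m m); rewrite addnK in hb.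
have -> : (m`! * m`! * (2 ^ m * 1 * 'C(m + m, m)) = 2 ^ m * (m + m)`!)%N by rewrite -hb; nring.
by rewrite divff // nz // muln_gt0 expn_gt0 fact_gt0.
Qed.

Lemma Bm1 n : Bcoef n n.+1 = (2 * n.+1 + 1)%N%:R.
Proof.
rewrite Bform // subSnn /S big_nat_recl // big_nat1 /T.
have e1 : (2 * n.+1 - 2 * n = 2)%N by nlia.
have e2 : (n.+1 + n = (2 * n).+1)%N by nlia.
have e3 : (n.+1 + n.+1 = (2 * n).+2)%N by nlia.
rewrite e1 e2 e3 subSnn !subnn binn bin0 binSn.
have h4 : 'C((2 * n).+1, n) = 'C((2 * n).+1, n.+1).
  have := bin_sub (n:=(2 * n).+1) (m:=n.+1); rewrite (_ : (2 * n).+1 - n.+1 = n)%N.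
    by move=> ->//; rewrite ltnS mul2n -addnn leq_addr.
  by rewrite mul2n -addnn subSS addnK.
have h3 : ('C((2 * n).+2, n.+1) = 2 * 'C((2 * n).+1, n))%N.
  by rewrite binS -h4 addnn -mul2n.
have hb : ('C((2 * n).+1, n) * (n`! * (n.+1)`!) = ((2 * n).+1)`!)%N.
  have := bin_fact (n:=(2 * n).+1) (m:=n); rewrite (_ : (2 * n).+1 - n = n.+1)%N //.
    by apply; rewrite ltnW // ltnS mul2n -addnn leq_addr.
  nlia.
rewrite h3 binSn.
have -> : (n`! * (n.+1)`! * 1`! * (2 ^ n * 2 * 'C((2 * n).+1, n) * 1 + 2 ^ n.+1 * 1 * (2 * 'C((2 * n).+1, n)) * n.+1)
   = (2 * n.+1 + 1) * (2 ^ n.+1 * ((2 * n).+1)`!))%N.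
  rewrite -hb expnS (_ : 1`! = 1)%N //; nring.
by rewrite natrM mulfK // nz // muln_gt0 expn_gt0 fact_gt0.
Qed.

Lemma oddall m j : ((j <= m)%N -> exists w : int, Bcoef (m - j) m = (2 * w + 1)%:~R) /\
   ((j.+1 <= m)%N -> exists w : int, Bcoef (m - j.+1) m = (2 * w + 1)%:~R).
Proof.
elim: j => [|j [IH1 IH2]].
  split=> [_|hm]; first by exists 0; rewrite subn0 Bmm.
  exists (m%:Z); rewrite subn1; case: m hm => // n _ /=; rewrite Bm1.
  by rewrite -[2 * _ + 1]/(((2 * n.+1 + 1)%N)%:Z) /=.
split=> // hm.
have [w1 h1] := IH2 (ltnW hm).
have [w0 h0] := IH1 (ltnW (ltnW hm)).
set l' := (m - j.+2)%N.
have hl : (l'.+2 <= m)%N by rewrite /l'; nlia.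
have R := rec hl.
have e1 : (l'.+1 = m - j.+1)%N by rewrite /l'; nlia.
have e2 : (l'.+2 = m - j)%N by rewrite /l'; nlia.
set c := ((m - l'.+1) * (m + l'.+1 + 1))%N in R.
rewrite e2 e1 h1 h0 in R.
have hc : c = (2 * c./2)%N.
  rewrite mul2n even_halfK // /c oddM.
  have hab : ((m - l'.+1) + (m + l'.+1 + 1) = (2 * m).+1)%N by rewrite /l'; nlia.
  move: (congr1 odd hab); rewrite oddD /= oddM /=.
  by case: (odd (m - l'.+1)); case: (odd (m + l'.+1 + 1)).
exists ((2 * m + 1)%N%:Z * w1 + m%:Z - (c./2)%:Z * (2 * w0 + 1)).
by rewrite R {1}hc -oddstep intrB !intrM.
Qed.

Theorem mainTheorem10 (m : nat) :
  Bcoef m m = 1 /\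
  ((1 <= m)%N -> Bcoef (m - 1) m = (2 * m + 1)%N%:R) /\
  (forall l : nat, (1 <= l)%N -> (l <= m - 1)%N ->
     Bcoef (l - 1) m = (2 * m + 1)%N%:R * Bcoef l m
                       - ((m - l) * (m + l + 1))%N%:R * Bcoef l.+1 m) /\
  (forall l : nat, (l <= m)%N ->
     exists z : int, odd `|z|%N /\ Bcoef l m = z%:~R).
Proof.
split; first exact: Bmm.
split.
  by case: m => // n _; rewrite subn1 /= Bm1.
split.
  case=> // l' _ hl; rewrite subn1 /=; apply: rec; nlia.
move=> l hl.
have [w hw] := (oddall m (m - l)).1 (leq_subr _ _).
rewrite subKn // in hw.
by exists (2 * w + 1); split => //; apply: oddabs.
Qed.
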